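(* Let $\epsilon>0$ and let $\mathcal V=\{s_L(1+\epsilon)^\ell:0\le\ell\le k\}$. For every instance of problem MR there is a feasible schedule in which every task runs at a speed belonging to $\mathcal V$ and whose objective value $\sum_j w_jC_j$ is at most $(1+\epsilon)$ times the optimal objective value of the instance.
   Context: Problem MR. There are jobs $\mathcal J=\{1,\dots,n\}$ and processors $\mathcal P=\{1,\dots,m\}$. Job $j$ has weight $w_j>0$, release date $r_j\ge0$, and a nonempty set of Map tasks and a nonempty set of Reduce tasks, preassigned to processors with at most one task of each job per processor; $T_{i,j}$ is the task of job $j$ on processor $i$, with work $v_{i,j}\ge0$; $\mathcal T$ is the set of all tasks. A schedule gives each task a start time and a constant speed $s_{i,j}>0$; the task runs non-preemptively for $v_{i,j}/s_{i,j}$ time units and uses energy $v_{i,j}s_{i,j}^{\beta-1}$, where $\beta>1$ is a fixed constant. Feasibility: each processor runs at most one task at a time; tasks of job $j$ start no earlier than $r_j$; Reduce tasks of job $j$ start only after all Map tasks of job $j$ complete; total energy at most a given budget $E>0$. $C_j$ is the maximum completion time of the tasks of job $j$; the objective is to minimize $\sum_j w_jC_j$. Notation: $w_{\min},w_{\max}$ are the min/max weights, $r_{\max}=\max_j r_j$, $v_{\max}=\max v_{i,j}$, $v_{\min}=\min\{v_{i,j}:v_{i,j}>0\}$, $t_{\max}=\frac{w_{\max}}{w_{\min}}\big(nr_{\max}+n(n+1)(|\mathcal T|v_{\max}^\beta/E)^{1/(\beta-1)}\big)$, $s_L=v_{\min}/t_{\max}$, $s_U=(E/v_{\min})^{1/(\beta-1)}$,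 and $k=\lceil\log_{1+\epsilon}(s_U/s_L)\rceil$. *)

(* Defs.v *)
From HB Require Import structures.
From mathcomp Require Import all_boot all_order all_algebra.
From mathcomp Require Import all_classical all_reals all_analysis.
Set Implicit Arguments. Unset Strict Implicit. Unset Printing Implicit Defensive.
Import Order.TTheory GRing.Theory Num.Theory.
Local Open Scope ring_scope.

Inductive kind := MapTask | ReduceTask.

(* kd i j = None : job j has no task on processor i;
   kd i j = Some MapTask / Some ReduceTask : T_{i,j} is a Map / Reduce task.
   This encodes "at most one task of each job per processor". *)
Definition is_task (o : option kind) : bool := if o is Some _ then true else false.
Definition is_map (o : option kind) : bool :=
  if o is Some MapTask then true else false.
Definition is_red (o : option kind) : bool :=
  if o is Some ReduceTask then true else false.

Section MR.
Variables (R : realType) (n m : nat).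
Variables (w r : 'I_n -> R) (kd : 'I_m -> 'I_n -> option kind)
          (v : 'I_m -> 'I_n -> R).

Definition valid_instance : Prop :=
  [/\ forall j, 0 < w j,
      forall j, 0 <= r j,
      forall i j, is_task (kd i j) -> 0 <= v i j,
      forall j, exists i, is_map (kd i j)
    & forall j, exists i, is_red (kd i j)].

Definition completion (t s : 'I_m -> 'I_n -> R) i j : R := t i j + v i j / s i j.

Definition energy (beta : R) (s : 'I_m -> 'I_n -> R) : R :=
  \sum_(p : 'I_m * 'I_n | is_task (kd p.1 p.2)) v p.1 p.2 * s p.1 p.2 `^ (beta - 1).

Definition feasible (beta E : R) (t s : 'I_m -> 'I_n -> R) : Prop :=
  [/\
      forall i j, is_task (kd i j) -> 0 < s i j,
      forall i j j', j != j' -> is_task (kd i j) -> is_task (kd i j') ->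
        completion t s i j <= t i j' \/ completion t s i j' <= t i j,
      forall i j, is_task (kd i j) -> r j <= t i j,
      forall i i' j, is_map (kd i j) -> is_red (kd i' j) ->
        completion t s i j <= t i' j
    &
      energy beta s <= E].

(* C_j : maximum completion time of the tasks of job j (all are >= r_j >= 0
   in a feasible schedule, so 0 is a harmless neutral element). *)
Definition Cj (t s : 'I_m -> 'I_n -> R) (j : 'I_n) : R :=
  \big[Num.max/0]_(i < m | is_task (kd i j)) completion t s i j.

Definition objective (t s : 'I_m -> 'I_n -> R) : R :=
  \sum_(j < n) w j * Cj t s j.

Definition w_max : R := \big[Num.max/0]_(j < n) w j.
Definition w_min : R := \big[Num.min/w_max]_(j < n) w j.
Definition r_max : R := \big[Num.max/0]_(j < n) r j.
Definition v_max : R :=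
  \big[Num.max/0]_(p : 'I_m * 'I_n | is_task (kd p.1 p.2)) v p.1 p.2.
Definition v_min : R :=
  \big[Num.min/v_max]_(p : 'I_m * 'I_n | is_task (kd p.1 p.2) && (0 < v p.1 p.2))
     v p.1 p.2.
Definition num_tasks : R :=
  (#|[set p : 'I_m * 'I_n | is_task (kd p.1 p.2)]|)%:R.

Definition t_max (beta E : R) : R :=
  w_max / w_min *
  (n%:R * r_max +
   n%:R * (n.+1)%:R * (num_tasks * v_max `^ beta / E) `^ (beta - 1)^-1).

Definition s_L (beta E : R) : R := v_min / t_max beta E.
Definition s_U (beta E : R) : R := (E / v_min) `^ (beta - 1)^-1.

Definition k_steps (beta E eps : R) : int :=
  Num.ceil (ln (s_U beta E / s_L beta E) / ln (1 + eps)).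

Definition in_speed_set (beta E eps : R) (x : R) : Prop :=
  exists l : nat, (l%:Z <= k_steps beta E eps)%R /\
                  x = s_L beta E * (1 + eps) ^+ l.

End MR.

(* Main.v *)
Require Import Defs.
From HB Require Import structures.
From mathcomp Require Import all_boot all_order all_algebra.
From mathcomp Require Import all_classical all_reals all_analysis.
From mathcomp Require Import ring lra zify.
Set Implicit Arguments. Unset Strict Implicit. Unset Printing Implicit Defensive.
Import Order.TTheory GRing.Theory Num.Theory.
Import numFieldNormedType.Exports.
Local Open Scope classical_set_scope.
Local Open Scope ring_scope.

Section Topo.
Variable T : topologicalType.

Lemma clos_sub (A S : set T) p : closed A -> S `<=` A -> closure S p -> A p.
Proof.
move=> hA hSA hp; apply: hA => B hB; have [y [hy hyB]] := hp B hB.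
by exists y; split => //; exact: hSA.
Qed.

Lemma cl_const (P : Prop) : closed [set _ : T | P].
Proof.
case: (pselect P) => hP.
  have -> : [set _ : T | P] = setT by apply/funext => x; apply/propext; split.
  exact: closedT.
have -> : [set _ : T | P] = set0 by apply/funext => x; apply/propext; split.
exact: closed0.
Qed.

Lemma cl_forall (I : Type) (Q : I -> T -> Prop) :
  (forall i, closed [set x | Q i x]) -> closed [set x | forall i, Q i x].
Proof.
move=> h p hp i; apply: (clos_sub (h i) _ hp) => x hx; exact: hx.
Qed.

Lemma cl_imp (c : Prop) (Q : T -> Prop) :
  closed [set x | Q x] -> closed [set x | c -> Q x].
Proof.
move=> h; case: (pselect c) => hc.
  have -> : [set x | c -> Q x] = [set x | Q x].
    by apply/funext => x; apply/propext; split; [move=> h0; exact: h0 hc | move=> h0 _].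
  exact: h.
have -> : [set x | c -> Q x] = setT.
  by apply/funext => x; apply/propext; split => // _ /hc.
exact: closedT.
Qed.

Lemma cl_or (A B : T -> Prop) :
  closed [set x | A x] -> closed [set x | B x] -> closed [set x | A x \/ B x].
Proof. by move=> hA hB; exact: (closedU hA hB). Qed.

Lemma cl_and5 (A B C D F : T -> Prop) :
  closed [set x | A x] -> closed [set x | B x] -> closed [set x | C x] ->
  closed [set x | D x] -> closed [set x | F x] ->
  closed [set x | [/\ A x, B x, C x, D x & F x]].
Proof.
move=> hA hB hC hD hF p hp; split.
- by apply: (clos_sub hA _ hp) => x [].
- by apply: (clos_sub hB _ hp) => x [].
- by apply: (clos_sub hC _ hp) => x [].
- by apply: (clos_sub hD _ hp) => x [].
- by apply: (clos_sub hF _ hp) => x [].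
Qed.

Variable R : realType.

Lemma cl_le (f g : T -> R) : continuous f -> continuous g ->
  closed [set x | f x <= g x].
Proof.
move=> hf hg.
have -> : [set x | f x <= g x] = (fun x => g x - f x) @^-1` [set y | 0 <= y].
  by apply/funext => x; apply/propext; rewrite /= subr_ge0.
apply: preimage_closed; last exact: closed_ge.
move=> x _; have := continuousB (hg x) (hf x); exact.
Qed.

Lemma cont_bigmax (I : finType) (P : pred I) (F : I -> T -> R) :
  (forall i, continuous (F i)) ->
  continuous (fun x => \big[Num.max/0]_(i | P i) F i x).
Proof.
move=> hF.
suff : forall s, continuous (fun x => \big[Num.max/0]_(i <- s | P i) F i x) by apply.
elim=> [|a s IH].
  under eq_fun do rewrite big_nil; exact: cst_continuous.
case: (boolP (P a)) => ha.
  under eq_fun do rewrite big_cons ha.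
  exact: (max_fun_continuous (hF a) IH).
by under eq_fun do rewrite big_cons (negbTE ha).
Qed.

Lemma cont_sum (I : finType) (F : I -> T -> R) :
  (forall i, continuous (F i)) ->
  continuous (fun x => \sum_(i : I) F i x).
Proof.
move=> hF.
suff : forall s, continuous (fun x => \sum_(i <- s) F i x) by apply.
elim=> [|a s IH].
  under eq_fun do rewrite big_nil; exact: cst_continuous.
under eq_fun do rewrite big_cons.
by move=> x; apply: continuousD; [exact: hF | exact: IH].
Qed.

End Topo.

Lemma coord_cont (R : realType) N (k : 'I_N) (c : R) :
  continuous (fun x : 'rV[R]_N => x ord0 k + c).
Proof.
move=> x; apply: continuousD; first exact: coord_continuous.
exact: cst_continuous.
Qed.

Lemma fin_min (R : realType) (I : finType) (P : pred I) (f : I -> R) :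
  (exists i, P i) -> exists i0, P i0 /\ forall i, P i -> f i0 <= f i.
Proof.
case=> i1 hi1.
case: (@arg_minP _ _ _ i1 P f hi1) => i hi hmin.
by exists i.
Qed.

Section Basic.
Variables (R : realType) (n m : nat) (beta E eps : R).
Variables (w r : 'I_n -> R) (kd : 'I_m -> 'I_n -> option kind) (v : 'I_m -> 'I_n -> R).
Hypotheses (hb : 1 < beta) (hE : 0 < E) (heps : 0 < eps)
  (hval : valid_instance w r kd v)
  (hpos : exists (i : 'I_m) (j : 'I_n), is_task (kd i j) /\ 0 < v i j).

Lemma w_gt0 j : 0 < w j. Proof. by case: hval. Qed.
Lemma r_ge0 j : 0 <= r j. Proof. by case: hval. Qed.
Lemma v_ge0 i j : is_task (kd i j) -> 0 <= v i j. Proof. by case: hval => _ _ h _ _; apply: h. Qed.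

Lemma le_wmax j : w j <= w_max w. 
Proof. exact: le_bigmax. Qed.

Lemma wmin_le j : w_min w <= w j.
Proof. exact: bigmin_le. Qed.

Lemma wmin_gt0 : 0 < w_min w.
Proof.
case: hpos => i [j _].
rewrite /w_min; apply: lt_bigmin => [|k _]; last exact: w_gt0.
exact: lt_le_trans (w_gt0 j) (le_wmax j).
Qed.

Lemma wmin_le_wmax : w_min w <= w_max w.
Proof. case: hpos => i [j _]; exact: le_trans (wmin_le j) (le_wmax j). Qed.

Lemma le_rmax j : r j <= r_max r.
Proof. exact: le_bigmax. Qed.

Lemma rmax_ge0 : 0 <= r_max r.
Proof. case: hpos => i [j _]; exact: le_trans (r_ge0 j) (le_rmax j). Qed.

Lemma v_le_vmax i j : is_task (kd i j) -> v i j <= v_max kd v.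
Proof.
move=> h; rewrite /v_max.
exact: (le_bigmax_cond _ (fun p : 'I_m * 'I_n => v p.1 p.2) (j := (i, j))).
Qed.

Lemma vmin_le i j : is_task (kd i j) -> 0 < v i j -> v_min kd v <= v i j.
Proof.
move=> h1 h2; rewrite /v_min.
apply: (bigmin_le_cond _ (fun p : 'I_m * 'I_n => v p.1 p.2) (j := (i, j))).
by rewrite /= h1 h2.
Qed.

Lemma vmax_gt0 : 0 < v_max kd v.
Proof. case: hpos => i [j [h1 h2]]; exact: lt_le_trans h2 (v_le_vmax h1). Qed.

Lemma vmin_gt0 : 0 < v_min kd v.
Proof.
rewrite /v_min; apply: lt_bigmin => [|p /andP[]//]; exact: vmax_gt0.
Qed.

Lemma vmin_le_vmax : v_min kd v <= v_max kd v.
Proof.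
case: hpos => i [j [h1 h2]]; exact: le_trans (vmin_le h1 h2) (v_le_vmax h1).
Qed.

Lemma n_gt0 : (0 < n)%N.
Proof. by case: hpos => i [j _]; case: j => j /= /(leq_trans _); apply. Qed.

Lemma NT_ge1 : 1 <= num_tasks R kd.
Proof.
rewrite /num_tasks ler1n; apply/card_gt0P.
by case: hpos => i [j [h _]]; exists (i, j); rewrite inE.
Qed.

Definition Dref : R :=
  (num_tasks R kd * v_max kd v `^ beta / E) `^ (beta - 1)^-1.

Lemma Dref_gt0 : 0 < Dref.
Proof.
apply: powR_gt0; apply: divr_gt0 => //; apply: mulr_gt0.
  exact: lt_le_trans ltr01 NT_ge1.
exact/powR_gt0/vmax_gt0.
Qed.

Lemma tmax_ge_D : Dref <= t_max w r kd v beta E.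
Proof.
rewrite /t_max -/Dref.
have h1 : 1 <= w_max w / w_min w.
  by rewrite ler_pdivlMr ?mul1r ?wmin_gt0 ?wmin_le_wmax.
have hD := Dref_gt0.
have hn : (1 <= n)%N := n_gt0.
apply: le_trans (_ : 1 * (n%:R * r_max r + n%:R * (n.+1)%:R * Dref) <= _).
  have hA : 0 <= n%:R * r_max r.
    by apply: mulr_ge0; [exact: ler0n | exact: rmax_ge0].
  have hB : Dref <= n%:R * (n.+1)%:R * Dref.
    apply: ler_peMl; first exact: ltW.
    by rewrite -natrM ler1n muln_gt0 hn.
  by rewrite mul1r; apply: le_trans (lerD hA hB); rewrite add0r.
apply: ler_wpM2r => //.
apply: addr_ge0; first by apply: mulr_ge0; [exact: ler0n | exact: rmax_ge0].
by apply: mulr_ge0; [apply: mulr_ge0; exact: ler0n | exact: ltW].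
Qed.

Lemma tmax_gt0 : 0 < t_max w r kd v beta E.
Proof. exact: lt_le_trans Dref_gt0 tmax_ge_D. Qed.

Lemma sL_gt0 : 0 < s_L w r kd v beta E.
Proof. exact: divr_gt0 vmin_gt0 tmax_gt0. Qed.


Local Notation tk i j := (is_task (kd i j)).
Local Notation sL := (s_L w r kd v beta E).
Local Notation sU := (s_U kd v beta E).
Local Notation kk := (k_steps w r kd v beta E eps).
Local Notation feas := (feasible r kd v beta E).
Local Notation obj := (objective w kd v).

Lemma term_le_sum (I : finType) (P : pred I) (F : I -> R) p :
  (forall q, P q -> 0 <= F q) -> P p -> F p <= \sum_(q | P q) F q.
Proof.
move=> h hp; rewrite (bigD1 p) //= lerDl; apply: sumr_ge0 => q /andP[hq _].
exact: h.
Qed.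

Lemma energy_term_le (s : 'I_m -> 'I_n -> R) i j : tk i j ->
  (forall i j, tk i j -> 0 < s i j) ->
  v i j * s i j `^ (beta - 1) <= energy kd v beta s.
Proof.
move=> h hs; rewrite /energy.
apply: (@term_le_sum _ (fun p : 'I_m * 'I_n => is_task (kd p.1 p.2))
  (fun p : 'I_m * 'I_n => v p.1 p.2 * s p.1 p.2 `^ (beta - 1)) (i, j)) => //.
move=> q hq; apply: mulr_ge0; [exact: v_ge0 | exact: powR_ge0].
Qed.

Lemma powR_inv_id x : 0 <= x -> (x `^ (beta - 1)) `^ (beta - 1)^-1 = x.
Proof.
move=> hx; rewrite -powRrM mulfV ?powRr1 //.
by rewrite subr_eq0 gt_eqF.
Qed.

Lemma speed_le_sU (s : 'I_m -> 'I_n -> R) i j :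
  (forall i j, tk i j -> 0 < s i j) -> energy kd v beta s <= E ->
  tk i j -> 0 < v i j -> s i j <= sU.
Proof.
move=> hs hen ht hv.
have hx := hs i j ht.
have h1 : v i j * s i j `^ (beta - 1) <= E := le_trans (energy_term_le ht hs) hen.
have h2 : s i j `^ (beta - 1) <= E / v_min kd v.
  rewrite ler_pdivlMr ?vmin_gt0 //.
  apply: le_trans h1; rewrite mulrC; apply: ler_wpM2r; first exact: powR_ge0.
  exact: vmin_le.
rewrite /s_U -[leLHS](powR_inv_id (ltW hx)).
apply: ge0_ler_powR => //; first by rewrite invr_ge0 subr_ge0 ltW.
  by rewrite nnegrE powR_ge0.
by rewrite nnegrE divr_ge0 // ltW // vmin_gt0.
Qed.

Lemma level_le_k (x : R) (l : nat) : x <= sU ->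
  sL * (1 + eps) ^+ l <= x -> (l%:Z <= kk)%R.
Proof.
move=> hxU hl.
have hsL := sL_gt0.
have he1 : 1 < 1 + eps by rewrite ltrDl.
have hpow : 0 < (1 + eps) ^+ l by apply: exprn_gt0; exact: lt_trans ltr01 he1.
have h1 : (1 + eps) ^+ l <= sU / sL.
  by rewrite ler_pdivlMr // mulrC; apply: le_trans hxU.
have hln : ln ((1 + eps) ^+ l) <= ln (sU / sL).
  rewrite ler_ln // posrE //; exact: lt_le_trans hpow h1.
rewrite lnXn in hln; last exact: lt_trans ltr01 he1.
have hl0 : 0 < ln (1 + eps) by apply: ln_gt0.
have hly : (l%:Z)%:~R <= ln (sU / sL) / ln (1 + eps).
  by rewrite ler_pdivlMr // mulrC mulrzr.
by have := le_ceil hly; rewrite intrKceil.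
Qed.

Lemma level_exists (x : R) : sL <= x -> x <= sU ->
  exists l : nat, [/\ (l%:Z <= kk)%R, sL * (1 + eps) ^+ l <= x &
                      x < sL * (1 + eps) ^+ l.+1].
Proof.
move=> hLx hxU.
pose P := fun l : nat => sL * (1 + eps) ^+ l <= x.
have hP0 : exists l, P l by exists 0%N; rewrite /P expr0 mulr1.
have hk0 : (0 <= kk)%R by apply: (@level_le_k x 0%N) => //; rewrite expr0 mulr1.
have hbnd : forall l, P l -> (l <= `|kk|)%N.
  move=> l hl; have := level_le_k hxU hl.
  by rewrite -{1}(gez0_abs hk0) lez_nat.
have [l hl hmax] := ex_maxnP hP0 hbnd.
exists l; split => //; first exact: level_le_k hxU hl.
rewrite ltNge; apply/negP => hc; have := hmax _ hc; by rewrite ltnn.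
Qed.


Lemma Cj_ge0 t s j : 0 <= Cj kd v t s j.
Proof. exact: bigmax_ge_id. Qed.

Lemma le_Cj t s i j : tk i j -> completion v t s i j <= Cj kd v t s j.
Proof.
move=> h; rewrite /Cj.
exact: (le_bigmax_cond _ (fun i => completion v t s i j) h).
Qed.

Lemma obj_scale (t s t' s' : 'I_m -> 'I_n -> R) (c : R) : 0 <= c ->
  (forall i j, tk i j -> completion v t' s' i j <= c * completion v t s i j) ->
  obj t' s' <= c * obj t s.
Proof.
move=> hc h.
have hC : forall j, Cj kd v t' s' j <= c * Cj kd v t s j.
  move=> j; rewrite /Cj; apply: bigmax_le.
    by apply: mulr_ge0 => //; exact: (Cj_ge0 t s j).
  move=> i hi; apply: le_trans (h i j hi) _; apply: ler_wpM2l => //.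
  exact: (le_Cj t s hi).
rewrite /objective mulr_sumr; apply: ler_sum => j _.
rewrite mulrCA; apply: ler_wpM2l; [exact: ltW (w_gt0 j) | exact: hC].
Qed.

Lemma dur_le (a b b' e' : R) : 0 <= a -> 0 < b -> 0 < b' -> 0 <= e' ->
  (0 < a -> b <= (1 + e') * b') -> a / b' <= (1 + e') * (a / b).
Proof.
move=> ha hB hB' he h.
case: (ltgtP a 0) => [an|apos|->]; last by rewrite !mul0r mulr0.
  by move: ha; rewrite leNgt an.
have h1 := h apos.
rewrite ler_pdivrMr //.
have -> : (1 + e') * (a / b) * b' = a * ((1 + e') * b' / b) by ring.
apply: ler_peMr; first exact: ltW.
by rewrite ler_pdivlMr // mul1r.
Qed.

Lemma round (t s : 'I_m -> 'I_n -> R) : feas t s ->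
  (forall i j, tk i j -> 0 < v i j -> sL <= s i j) ->
  exists t' s', [/\ feas t' s',
    (forall i j, tk i j -> in_speed_set w r kd v beta E eps (s' i j)) &
    obj t' s' <= (1 + eps) * obj t s].
Proof.
move=> hf hsl; case: (hf) => hs hdis hrel hprec hen.
pose Q i j (l : nat) := if tk i j && (0 < v i j) then
   [/\ (l%:Z <= kk)%R, sL * (1 + eps) ^+ l <= s i j &
       s i j < sL * (1 + eps) ^+ l.+1] else l = 0%N.
have hQ : forall i j, exists l, Q i j l.
  move=> i j; rewrite /Q; case: (boolP (tk i j && (0 < v i j))) => [/andP[h1 h2]|_];
    last by exists 0%N.
  exact: level_exists (hsl i j h1 h2) (speed_le_sU hs hen h1 h2).
have [L hL] : exists L : 'I_m -> 'I_n -> nat, forall i j, Q i j (L i j).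
  have hi : forall i, exists f : 'I_n -> nat, forall j, Q i j (f j).
    by move=> i; case: (choice (hQ i)) => f hF; exists f.
  by case: (choice hi) => f hF; exists f.
have hk0 : (0 <= kk)%R.
  case: hpos => i0 [j0 [h1 h2]]; have := hL i0 j0; rewrite /Q h1 h2 /=.
  by case => h _ _; apply: le_trans h.
have hsL := sL_gt0.
have he1 : 0 < 1 + eps by apply: addr_gt0.
pose s' i j := sL * (1 + eps) ^+ L i j.
pose t' i j := (1 + eps) * t i j.
have hs' : forall i j, 0 < s' i j by move=> i j; apply: mulr_gt0 => //; exact: exprn_gt0.
have hcomp : forall i j, tk i j ->
    completion v t' s' i j <= (1 + eps) * completion v t s i j.
  move=> i j hi; rewrite /completion mulrDr lerD2l.
  apply: dur_le => //; [exact: v_ge0 | exact: hs | exact: ltW | ].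
  move=> hv; have := hL i j; rewrite /Q hi hv /= => -[_ _ h3].
  by apply: ltW; rewrite mulrC /s' -mulrA -exprSr.
exists t', s'; split.
- split.
  + by move=> i j _; exact: hs'.
  + move=> i j j' hjj hi hi'.
    case: (hdis i j j' hjj hi hi') => h; [left|right].
      by apply: le_trans (hcomp i j hi) _; rewrite /t'; apply: ler_wpM2l => //; exact: ltW.
    by apply: le_trans (hcomp i j' hi') _; rewrite /t'; apply: ler_wpM2l => //; exact: ltW.
  + move=> i j hi; apply: le_trans (hrel i j hi) _; rewrite /t'.
    apply: ler_peMl; last by rewrite lerDl ltW.
    exact: le_trans (r_ge0 j) (hrel i j hi).
  + move=> i i' j hi hi'.
    have hti : is_task (kd i j) by case: (kd i j) hi.
    apply: le_trans (hcomp i j hti) _; rewrite /t'.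
    by apply: ler_wpM2l; [exact: ltW | exact: hprec].
  + apply: le_trans hen; rewrite /energy; apply: ler_sum => p hp.
    case: (ltgtP (v p.1 p.2) 0) => [hn|hv|->]; last by rewrite !mul0r.
      by move: (v_ge0 hp); rewrite leNgt hn.
    apply: ler_wpM2l; first exact: ltW.
    have := hL p.1 p.2; rewrite /Q hp hv /= => -[_ h2 _].
    apply: ge0_ler_powR => //; first by rewrite subr_ge0 ltW.
      by rewrite nnegrE ltW.
    by rewrite nnegrE ltW // hs.
- move=> i j hi; exists (L i j); split => //.
  have := hL i j; rewrite /Q hi.
  by case: (0 < v i j) => /= [[]//|->].
- apply: obj_scale; [exact: ltW | exact: hcomp].
Qed.


Local Notation tM := (t_max w r kd v beta E).

Lemma slow_obj (t s : 'I_m -> 'I_n -> R) i j : feas t s -> tk i j -> 0 < v i j ->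
  s i j < sL -> w_min w * tM < obj t s.
Proof.
move=> hf hi hv hsl; case: hf => hs _ hrel _ _.
have hsij := hs i j hi.
have htM := tmax_gt0.
have hvm := vmin_gt0.
have h1 : tM < v i j / s i j.
  rewrite ltr_pdivlMr //.
  apply: lt_le_trans (vmin_le hi hv).
  have -> : v_min kd v = tM * sL by rewrite /s_L mulrC divfK // gt_eqF.
  by rewrite ltr_pM2l.
have h2 : tM < Cj kd v t s j.
  apply: lt_le_trans h1 _; apply: le_trans (le_Cj t s hi).
  rewrite /completion lerDr; exact: le_trans (r_ge0 j) (hrel i j hi).
apply: lt_le_trans (_ : w j * Cj kd v t s j <= _).
  apply: lt_le_trans (_ : w_min w * tM < w_min w * Cj kd v t s j) _.
    by rewrite ltr_pM2l // wmin_gt0.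
  by apply: ler_wpM2r; [exact: Cj_ge0 | exact: wmin_le].
rewrite /objective.
apply: (@term_le_sum _ xpredT (fun j => w j * Cj kd v t s j) j) => // q _.
by apply: mulr_ge0; [exact: ltW (w_gt0 q) | exact: Cj_ge0].
Qed.

Lemma sum2j (k : nat) : (\sum_(j < k) (2 * j + 2))%N = (k * k.+1)%N.
Proof.
elim: k => [|k IH]; first by rewrite big_ord0.
by rewrite big_ord_recr /= IH; lia.
Qed.

Lemma ref_sched : exists t s, [/\ feas t s,
  (forall i j, tk i j -> 0 < v i j -> sL <= s i j) & obj t s <= w_min w * tM].
Proof.
pose D := Dref.
have hD : 0 < D := Dref_gt0.
have hvM := vmax_gt0.
pose sg := v_max kd v / D.
have hsg : 0 < sg by apply: divr_gt0.
pose pos (i : 'I_m) (j : 'I_n) := (2 * j + (if is_red (kd i j) then 1 else 0))%N.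
pose t i j := r_max r + (pos i j)%:R * D.
pose s (i : 'I_m) (j : 'I_n) := sg.
have hdur : forall i j, tk i j -> v i j / s i j <= D.
  move=> i j hi; rewrite /s /sg invf_div mulrA ler_pdivrMr // mulrC.
  by apply: ler_wpM2l; [exact: ltW | exact: v_le_vmax].
have hcomp : forall i j, tk i j -> completion v t s i j <= r_max r + (pos i j).+1%:R * D.
  move=> i j hi; rewrite /completion /t -addrA lerD2l -natr1 mulrDl mul1r lerD2l.
  exact: hdur.
have hnat : forall (a b : nat), (a <= b)%N -> a%:R * D <= b%:R * D.
  by move=> a b hab; apply: ler_wpM2r; [exact: ltW | rewrite ler_nat].
exists t, s; split.
- split.
  + by move=> i j _.
  + move=> i j j' hjj hi hi'.
    have : (j < j')%N \/ (j' < j)%N.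
      by case: (ltngtP j j') => [h|h|h]; [left|right|move: hjj; rewrite (val_inj h) eqxx].
    case=> hlt; [left|right].
      apply: le_trans (hcomp i j hi) _; rewrite /t lerD2l; apply: hnat.
      rewrite /pos; case: (is_red _); case: (is_red _); lia.
    apply: le_trans (hcomp i j' hi') _; rewrite /t lerD2l; apply: hnat.
    rewrite /pos; case: (is_red _); case: (is_red _); lia.
  + move=> i j hi; apply: le_trans (le_rmax j) _; rewrite /t lerDl.
    by apply: mulr_ge0; [exact: ler0n | exact: ltW].
  + move=> i i' j hi hi'.
    have hti : is_task (kd i j) by case: (kd i j) hi.
    apply: le_trans (hcomp i j hti) _; rewrite /t lerD2l; apply: hnat.
    rewrite /pos; move: hi hi'; case: (kd i j) => [[]|] //= _.
    by case: (kd i' j) => [[]|] //= _; lia.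
  + rewrite /energy.
    apply: le_trans (_ : \sum_(p : 'I_m * 'I_n | is_task (kd p.1 p.2))
         v_max kd v * sg `^ (beta - 1) <= _).
      apply: ler_sum => p hp; rewrite /s ler_wpM2r ?powR_ge0 //.
      exact: v_le_vmax.
    rewrite sumr_const -mulr_natl.
    have -> : (#|[pred p : 'I_m * 'I_n | is_task (kd p.1 p.2)]|)%:R = num_tasks R kd.
      by rewrite /num_tasks cardsE.
    have hX : 0 < num_tasks R kd * v_max kd v `^ beta / E.
      apply: divr_gt0 => //; apply: mulr_gt0; last exact: powR_gt0.
      exact: lt_le_trans ltr01 NT_ge1.
    have hDp : D `^ (beta - 1) = num_tasks R kd * v_max kd v `^ beta / E.
      rewrite /D /Dref -powRrM mulVf ?powRr1 ?ltW //.
      by rewrite subr_eq0 gt_eqF.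
    have hsgp : sg `^ (beta - 1) * D `^ (beta - 1) = v_max kd v `^ (beta - 1).
      by rewrite -powRM ?ltW // /sg divfK // gt_eqF.
    have hsg' : sg `^ (beta - 1) = v_max kd v `^ (beta - 1) / (D `^ (beta - 1)).
      by rewrite -hsgp mulfK // gt_eqF // powR_gt0.
    have hb0 : 0 < beta by exact: lt_trans ltr01 hb.
    rewrite hsg' hDp (mulrA (v_max kd v)) (mulr_powRB1 (ltW hvM) hb0).
    have hNT : 0 < num_tasks R kd by exact: lt_le_trans ltr01 NT_ge1.
    have hA : 0 < v_max kd v `^ beta by exact: powR_gt0.
    set A := v_max kd v `^ beta; set N := num_tasks R kd.
    have -> : N * (A / (N * A / E)) = E.
      by field; rewrite ?gt_eqF //; apply/andP; rewrite ?gt_eqF.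
    by [].
- move=> i j hi _; rewrite /s /sg /s_L.
  have htM := tmax_gt0.
  apply: le_trans (_ : v_max kd v / tM <= _).
    by apply: ler_wpM2r; [rewrite invr_ge0; exact: ltW | exact: vmin_le_vmax].
  apply: ler_wpM2l; first exact: ltW.
  by rewrite lef_pV2 ?posrE //; exact: tmax_ge_D.
- have hC : forall j : 'I_n, Cj kd v t s j <= r_max r + (2 * j + 2)%N%:R * D.
    move=> j; rewrite /Cj; apply: bigmax_le.
      apply: addr_ge0; first exact: rmax_ge0.
      by apply: mulr_ge0; [exact: ler0n | exact: ltW].
    move=> i hi; apply: le_trans (hcomp i j hi) _; rewrite lerD2l; apply: hnat.
    by rewrite /pos; case: (is_red _); lia.
  apply: le_trans (_ : \sum_(j < n) w_max w * (r_max r + (2 * j + 2)%N%:R * D) <= _).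
    rewrite /objective; apply: ler_sum => j _.
    apply: le_trans (_ : w j * (r_max r + (2 * j + 2)%N%:R * D) <= _).
      by apply: ler_wpM2l; [exact: ltW (w_gt0 j) | exact: hC].
    apply: ler_wpM2r; last exact: le_wmax.
    apply: addr_ge0; first exact: rmax_ge0.
    by apply: mulr_ge0; [exact: ler0n | exact: ltW].
  rewrite -mulr_sumr big_split /= sumr_const card_ord -mulr_suml -natr_sum sum2j.
  rewrite /t_max -/Dref -/D mulrA (mulrC (w_min w)) divfK; last first.
    by rewrite gt_eqF // wmin_gt0.
  by rewrite natrM -[r_max r *+ n]mulr_natl.
Qed.


Local Notation Nm := (m * n)%N.
Definition tx (x : 'rV[R]_Nm) : 'I_m -> 'I_n -> R :=
  fun i j => x ord0 (mxvec_index i j).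

Lemma comp_ext (t s t' s' : 'I_m -> 'I_n -> R) i j :
  t i j = t' i j -> s i j = s' i j -> completion v t s i j = completion v t' s' i j.
Proof. by rewrite /completion => -> ->. Qed.

Lemma feas_ext (t s t' s' : 'I_m -> 'I_n -> R) :
  (forall i j, tk i j -> t i j = t' i j /\ s i j = s' i j) -> feas t s -> feas t' s'.
Proof.
move=> h [hs hdis hrel hprec hen]; split.
- by move=> i j hi; case: (h i j hi) => _ <-; exact: hs.
- move=> i j j' hjj hi hi'.
  have [e1 e2] := h i j hi; have [e3 e4] := h i j' hi'.
  rewrite -(comp_ext e1 e2) -(comp_ext e3 e4) -e1 -e3.
  exact: hdis.
- by move=> i j hi; case: (h i j hi) => <- _; exact: hrel.
- move=> i i' j hi hi'.
  have hti : tk i j by case: (kd i j) hi.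
  have hti' : tk i' j by case: (kd i' j) hi'.
  have [e1 e2] := h i j hti; have [e3 e4] := h i' j hti'.
  rewrite -(comp_ext e1 e2) -e3; exact: hprec.
- apply: le_trans hen; rewrite /energy le_eqVlt; apply/orP; left; apply/eqP.
  by apply: eq_bigr => p hp; case: (h _ _ hp) => _ ->.
Qed.

Lemma obj_ext (t s t' s' : 'I_m -> 'I_n -> R) :
  (forall i j, tk i j -> t i j = t' i j /\ s i j = s' i j) -> obj t s = obj t' s'.
Proof.
move=> h; rewrite /objective; apply: eq_bigr => j _; congr (_ * _).
rewrite /Cj; apply: eq_bigr => i hi; case: (h i j hi) => e1 e2.
exact: comp_ext.
Qed.

Lemma t_le_obj (t s : 'I_m -> 'I_n -> R) i j : feas t s -> tk i j ->
  t i j <= obj t s / w_min w.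
Proof.
move=> hf hi; case: (hf) => hs _ _ _ _.
rewrite ler_pdivlMr ?wmin_gt0 //.
have h1 : t i j <= Cj kd v t s j.
  apply: le_trans (le_Cj t s hi); rewrite /completion lerDl.
  by apply: divr_ge0; [exact: v_ge0 | exact: ltW (hs i j hi)].
apply: le_trans (_ : w j * Cj kd v t s j <= _).
  rewrite mulrC; apply: le_trans (_ : w_min w * Cj kd v t s j <= _).
    by apply: ler_wpM2l; [exact: ltW wmin_gt0 | exact: h1].
  by apply: ler_wpM2r; [exact: Cj_ge0 | exact: wmin_le].
rewrite /objective.
apply: (@term_le_sum _ xpredT (fun j => w j * Cj kd v t s j) j) => // q _.
by apply: mulr_ge0; [exact: ltW (w_gt0 q) | exact: Cj_ge0].
Qed.

Lemma obj_ge0 (t s : 'I_m -> 'I_n -> R) : 0 <= obj t s.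
Proof.
rewrite /objective; apply: sumr_ge0 => j _.
by apply: mulr_ge0; [exact: ltW (w_gt0 j) | exact: Cj_ge0].
Qed.

Local Notation VF t s := (feas t s /\
  (forall i j, tk i j -> in_speed_set w r kd v beta E eps (s i j))).

Lemma min_exists : (exists t s, VF t s) ->
  exists t s, VF t s /\ forall t' s', VF t' s' -> obj t s <= obj t' s'.
Proof.
case=> t0 [s0 [hf0 hv0]].
have hk0 : (0 <= kk)%R.
  case: hpos => i [j [hi _]]; case: (hv0 i j hi) => l [hl _].
  by apply: le_trans hl.
pose K := (`|kk|).+1.
pose sp (F : {ffun 'I_m * 'I_n -> 'I_K}) i j := sL * (1 + eps) ^+ F (i, j).
have hspV : forall F i j, in_speed_set w r kd v beta E eps (sp F i j).
  move=> F i j; exists (F (i, j) : nat); split => //.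
  have := ltn_ord (F (i, j)); rewrite /K ltnS.
  move: (nat_of_ord (F (i, j))) => l hle.
  by rewrite -(gez0_abs hk0) lez_nat.
have hlev : forall t s, VF t s -> exists F, forall i j, tk i j -> s i j = sp F i j.
  move=> t s [_ hv].
  have hp : forall p : 'I_m * 'I_n, exists l : 'I_K,
      tk p.1 p.2 -> s p.1 p.2 = sL * (1 + eps) ^+ l.
    move=> [i j] /=; case: (boolP (tk i j)) => hi; last by exists ord0.
    case: (hv i j hi) => l [hl ->].
    have hlK : (l < K)%N by rewrite /K ltnS -lez_nat (gez0_abs hk0).
    by exists (Ordinal hlK).
  case: (choice hp) => f hF; exists (finfun f) => i j hi.
  by rewrite /sp ffunE; exact: (hF (i, j)).
pose O0 := obj t0 s0.
pose Bd := O0 / w_min w.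
have hBd : 0 <= Bd by apply: divr_ge0; [exact: obj_ge0 | exact: ltW wmin_gt0].
pose Sset F := [set x : 'rV[R]_Nm |
   (forall k, 0 <= x ord0 k /\ x ord0 k <= Bd) /\ feas (tx x) (sp F)].
pose fo F (x : 'rV[R]_Nm) := obj (tx x) (sp F).
have hemb : forall t s, VF t s -> obj t s <= O0 ->
    exists F x, Sset F x /\ fo F x = obj t s.
  move=> t s hts hO; have [F hF] := hlev t s hts.
  pose x : 'rV[R]_Nm := mxvec (\matrix_(i, j) (if tk i j then t i j else 0)).
  have hx : forall i j, tx x i j = if tk i j then t i j else 0.
    by move=> i j; rewrite /tx /x mxvecE mxE.
  have hext : forall i j, tk i j -> t i j = tx x i j /\ s i j = sp F i j.
    by move=> i j hi; rewrite hx hi; split => //; exact: hF.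
  exists F, x; split; last by rewrite /fo -(obj_ext hext).
  split; last exact: feas_ext hext hts.1.
  move=> k; case/mxvec_indexP: k => i j.
  have := hx i j; rewrite /tx => ->.
  case: (boolP (tk i j)) => hi; last by split.
  split.
    apply: le_trans (r_ge0 j) _; by case: hts.1 => _ _ hrel _ _; apply: hrel.
  apply: le_trans (t_le_obj hts.1 hi) _.
  by apply: ler_wpM2r => //; rewrite invr_ge0; exact: ltW wmin_gt0.
have hSVF : forall F x, Sset F x -> VF (tx x) (sp F).
  by move=> F x [_ hf]; split => // i j _; exact: hspV.
have hcl : forall F, closed (Sset F).
  move=> F; apply: closedI.
    apply: cl_forall => k; apply: closedI.
      apply: cl_le; [exact: cst_continuous | exact: coord_continuous].
    apply: cl_le; [exact: coord_continuous | exact: cst_continuous].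
  rewrite /feasible; apply: cl_and5.
  - exact: cl_const.
  - apply: cl_forall => i; apply: cl_forall => j; apply: cl_forall => j'.
    apply: cl_imp; apply: cl_imp; apply: cl_imp; apply: cl_or.
      apply: cl_le; [exact: coord_cont | exact: coord_continuous].
    apply: cl_le; [exact: coord_cont | exact: coord_continuous].
  - apply: cl_forall => i; apply: cl_forall => j; apply: cl_imp.
    apply: cl_le; [exact: cst_continuous | exact: coord_continuous].
  - apply: cl_forall => i; apply: cl_forall => i'; apply: cl_forall => j.
    apply: cl_imp; apply: cl_imp.
    apply: cl_le; [exact: coord_cont | exact: coord_continuous].
  - exact: cl_const.
have hcp : forall F, compact (Sset F).
  move=> F; apply: subclosed_compact (hcl F) _ _.
    apply: (@rV_compact _ Nm (fun _ => `[0, Bd]%classic)) => k; exact: segment_compact.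
  move=> x [hB _] k /=; case: (hB k) => h1 h2.
  by rewrite in_itv /= h1 h2.
have hct : forall F, continuous (fo F).
  move=> F; rewrite /fo /objective.
  apply: cont_sum => j x; apply: continuousM; first exact: cst_continuous.
  rewrite /Cj; apply: cont_bigmax => i; exact: coord_cont.
have hm : forall F, exists c, Sset F !=set0 ->
    Sset F c /\ forall y, Sset F y -> fo F c <= fo F y.
  move=> F; case: (pselect (Sset F !=set0)) => hne; last by exists 0.
  have hcw : {within Sset F, continuous (fo F)}.
    by apply: continuous_subspaceT; exact: hct.
  have [c hc hmin] := compact_EVT_min hne (hcp F) hcw.
  exists c => _; split; first by rewrite in_setE in hc.
  by move=> y hy; apply: hmin; rewrite in_setE.
case: (choice hm) => cF hcF.
have [F0 [x0 [hx0 ho0]]] := hemb t0 s0 (conj hf0 hv0) (lexx _).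
have [Fs [hFs hmin]] := @fin_min R _ (fun F => `[< Sset F !=set0 >]) (fun F => fo F (cF F))
   (ex_intro _ F0 (asboolT (ex_intro _ x0 hx0))).
have hne : Sset Fs !=set0 by exact/asboolP.
have [hcs hcsmin] := hcF Fs hne.
exists (tx (cF Fs)), (sp Fs); split; first exact: hSVF.
move=> t' s' hts'.
have key : forall F x, Sset F x -> fo Fs (cF Fs) <= fo F x.
  move=> F x hx.
  have hneF : Sset F !=set0 by exists x.
  apply: le_trans (hmin F (asboolT hneF)) _.
  exact: (hcF F hneF).2.
case: (lerP (obj t' s') O0) => hO.
  have [F [x [hx <-]]] := hemb t' s' hts' hO.
  exact: key F x hx.
apply: le_trans (key F0 x0 hx0) _; rewrite ho0; exact: ltW hO.
Qed.


Lemma main_result : exists t s : 'I_m -> 'I_n -> R,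
    [/\ feas t s,
        (forall i j, tk i j -> in_speed_set w r kd v beta E eps (s i j))
      & forall t' s' : 'I_m -> 'I_n -> R, feas t' s' ->
          obj t s <= (1 + eps) * obj t' s'].
Proof.
have [tr [sr [hfr hslr hobjr]]] := ref_sched.
have [t1 [s1 [hf1 hV1 ho1]]] := round hfr hslr.
have [t [s [[hf hV] hmin]]] := min_exists (ex_intro _ t1 (ex_intro _ s1 (conj hf1 hV1))).
have he : 0 <= 1 + eps by apply: addr_ge0 => //; exact: ltW.
exists t, s; split => // t' s' hf'.
case: (pselect (exists i j, tk i j /\ 0 < v i j /\ s' i j < sL)).
  case=> i [j [hi [hv hsl]]].
  have hsw := slow_obj hf' hi hv hsl.
  apply: le_trans (hmin t1 s1 (conj hf1 hV1)) _.
  apply: le_trans ho1 _; apply: ler_wpM2l => //.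
  exact: le_trans hobjr (ltW hsw).
move=> hno.
have hsl : forall i j, tk i j -> 0 < v i j -> sL <= s' i j.
  move=> i j hi hv; rewrite leNgt; apply/negP => h; apply: hno.
  by exists i, j.
have [t2 [s2 [hf2 hV2 ho2]]] := round hf' hsl.
exact: le_trans (hmin t2 s2 (conj hf2 hV2)) ho2.
Qed.

End Basic.

Theorem lemma1 (R : realType) (n m : nat) (beta E eps : R)
  (w r : 'I_n -> R) (kd : 'I_m -> 'I_n -> option kind) (v : 'I_m -> 'I_n -> R) :
  1 < beta -> 0 < E -> 0 < eps ->
  valid_instance w r kd v ->
  (exists (i : 'I_m) (j : 'I_n), is_task (kd i j) /\ 0 < v i j) ->
  exists t s : 'I_m -> 'I_n -> R,
    [/\ feasible r kd v beta E t s,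
        (forall i j, is_task (kd i j) -> in_speed_set w r kd v beta E eps (s i j))
      & forall t' s' : 'I_m -> 'I_n -> R, feasible r kd v beta E t' s' ->
          objective w kd v t s <= (1 + eps) * objective w kd v t' s'].
Proof.
move=> hb hE heps hval hpos.
exact: main_result.
Qed.
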